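(* Let $S$ be a Boolean inverse monoid satisfying condition (H). Then: (1) for each $s\in S$ there is an idempotent $e_s$ such that $e_s=\bigvee_{c\in C}c$ for every finite cover $C\subseteq\mathcal J_s$ of $\mathcal J_s$, and $\mathcal J_s=\{e\in E(S): e\le e_s\}$; (2) $e_{s^*}=e_s$ for all $s\in S$; (3) $e_{st}\le ss^*$ and $e_{st}\le t^*t$ for all $s,t\in S$; (4) $e_{s^*t}e_{t^*r}\le e_{s^*r}$ for all $s,t,r\in S$.
   Context: An inverse semigroup is a semigroup $S$ in which every $s$ has a unique $s^*$ with $ss^*s=s$, $s^*ss^*=s^*$; assumed countable with a zero. $E(S)$ is its set of idempotents; natural order $s\le t$ iff $ts^*s=s$ (on idempotents $e\le f$ iff $ef=e$). A Boolean inverse monoid is an inverse monoid in which every finite compatible set (pairwise $s^*t,st^*\in E(S)$) has a join, multiplication distributes over such joins, and $E(S)$ is a Boolean algebra. For $Z\subseteq W\subseteq E(S)$, $Z$ is a cover of $W$ if every nonzero $w\in W$ has some $z\in Z$ with $zw\ne0$. For $s\in S$ let $\mathcal J_s=\{e\in E(S): se=e\}$. Condition (H): for every $s\in S$, $\mathcal J_s$ admits a finite cover (by a finite subset of $\mathcal J_s$). *)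

(* Defs.v *)
From Stdlib Require Import List.
Import ListNotations.
Set Implicit Arguments.

Record InvMonoid := {
  car :> Type;
  mul : car -> car -> car;
  one : car;
  zero : car;
  star : car -> car;
  mulA : forall a b c, mul a (mul b c) = mul (mul a b) c;
  mul1s : forall a, mul one a = a;
  muls1 : forall a, mul a one = a;
  mul0s : forall a, mul zero a = zero;
  muls0 : forall a, mul a zero = zero;
  star_inv1 : forall s, mul (mul s (star s)) s = s;
  star_inv2 : forall s, mul (mul (star s) s) (star s) = star s;
  star_unique : forall s t, mul (mul s t) s = s -> mul (mul t s) t = t -> t = star s;
  countable : exists f : car -> nat, forall x y, f x = f y -> x = y
}.

Section Defs.
Context {S : InvMonoid}.
Local Notation "a * b" := (mul S a b).
Local Notation "s ^*" := (star S s) (at level 2, format "s ^*").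

Definition idem (e : S) : Prop := e * e = e.

Definition nle (s t : S) : Prop := t * (s^* * s) = s.

Definition compat (s t : S) : Prop := idem (s^* * t) /\ idem (s * t^*).
Definition compat_set (A : list S) : Prop :=
  forall s t, In s A -> In t A -> compat s t.

Definition is_join (A : list S) (j : S) : Prop :=
  (forall a, In a A -> nle a j) /\
  (forall u, (forall a, In a A -> nle a u) -> nle j u).

Definition is_joinE (e f j : S) : Prop :=
  idem j /\ nle e j /\ nle f j /\
  (forall u, idem u -> nle e u -> nle f u -> nle j u).
Definition is_meetE (e f m : S) : Prop :=
  idem m /\ nle m e /\ nle m f /\
  (forall u, idem u -> nle u e -> nle u f -> nle u m).

(* E(S), with the natural order, is a Boolean algebra: a bounded
   distributive lattice in which every element has a complement. *)
Definition E_boolean : Prop :=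
  (exists bot top, idem bot /\ idem top /\
     (forall e, idem e -> nle bot e /\ nle e top) /\
     (forall e, idem e -> exists c, idem c /\ is_meetE e c bot /\ is_joinE e c top)) /\
  (forall e f, idem e -> idem f -> exists j, is_joinE e f j) /\
  (forall e f, idem e -> idem f -> exists m, is_meetE e f m) /\
  (forall e f g fg m1 m2 m3 j, idem e -> idem f -> idem g ->
     is_joinE f g fg -> is_meetE e fg m1 -> is_meetE e f m2 -> is_meetE e g m3 ->
     is_joinE m2 m3 j -> m1 = j).

Definition boolean_inverse_monoid : Prop :=
  (forall A, compat_set A -> exists j, is_join A j) /\
  (forall A j s, compat_set A -> is_join A j ->
     is_join (map (fun a => s * a) A) (s * j) /\
     is_join (map (fun a => a * s) A) (j * s)) /\
  E_boolean.

Definition Jset (s e : S) : Prop := idem e /\ s * e = e.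

(* Z is a cover of W (Z subset of W assumed separately) *)
Definition is_cover (Z : list S) (W : S -> Prop) : Prop :=
  forall w, W w -> w <> zero S -> exists z, In z Z /\ z * w <> zero S.

Definition finite_cover_J (s : S) (C : list S) : Prop :=
  (forall c, In c C -> Jset s c) /\ is_cover C (Jset s).

Definition condH : Prop := forall s : S, exists C, finite_cover_J s C.

End Defs.

(* Main.v *)
Require Import Defs.
From Stdlib Require Import List Setoid Classical ClassicalEpsilon.
Section A.
Variable S : InvMonoid.
Local Notation "a * b" := (mul S a b).
Local Notation "s ^*" := (star S s) (at level 2, format "s ^*").
Lemma pre (a b : S) : a = b -> forall y, y * a = y * b.
Proof. intros; subst; auto. Qed.
Lemma lift1 (a b : S) : one S * a = one S * b -> a = b.
Proof. rewrite !(mul1s S). auto. Qed.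
Ltac mkpre H n := pose proof (pre _ _ H) as n; repeat setoid_rewrite (mulA S) in n.
Ltac lnorm := apply lift1; rewrite ?(mulA S).

Lemma star_star (s : S) : s^*^* = s.
Proof. symmetry. apply (star_unique S). apply star_inv2. apply star_inv1. Qed.

Lemma idem_star (e : S) : idem e -> e^* = e.
Proof. unfold idem; intro He. symmetry; apply (star_unique S); rewrite !He; auto. Qed.

Lemma idem_mul (e f : S) : idem e -> idem f -> idem (e*f).
Proof.
  unfold idem; intros He Hf.
  mkpre He He'. mkpre Hf Hf'.
  pose proof (star_inv1 S (e*f)) as I1. mkpre I1 I1'.
  pose proof (star_inv2 S (e*f)) as I2. mkpre I2 I2'.
  assert (HA: f*(e*f)^* * e = (e*f)^*).
  { apply (star_unique S).
    - lnorm. repeat first [rewrite He' | rewrite Hf' | rewrite I1']. reflexivity.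
    - lnorm. repeat first [rewrite He' | rewrite Hf' | rewrite I2']. reflexivity. }
  assert (Hx: idem ((e*f)^*)).
  { unfold idem. rewrite <- HA. lnorm. repeat first [rewrite I2']. reflexivity. }
  pose proof (idem_star _ Hx) as Hs. rewrite star_star in Hs. unfold idem; rewrite Hs. exact Hx.
Qed.

Lemma comm (e f : S) : idem e -> idem f -> e*f = f*e.
Proof.
  intros He Hf.
  pose proof (idem_mul _ _ He Hf) as H1. pose proof (idem_mul _ _ Hf He) as H2.
  transitivity ((e*f)^*). { symmetry; apply idem_star; auto. }
  symmetry. unfold idem in *.
  mkpre He He'. mkpre Hf Hf'. mkpre H1 H1'. mkpre H2 H2'.
  apply (star_unique S).
  - lnorm. repeat first [rewrite He' | rewrite Hf' | rewrite H1']. reflexivity.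
  - lnorm. repeat first [rewrite He' | rewrite Hf' | rewrite H2']. reflexivity.
Qed.

Lemma idem_ss (s : S) : idem (s^* * s).
Proof. unfold idem. pose proof (star_inv2 S s) as I. mkpre I I'. lnorm. rewrite I'. reflexivity. Qed.
Lemma idem_ss' s : idem (s * s^*).
Proof. unfold idem. pose proof (star_inv1 S s) as I. mkpre I I'. lnorm. rewrite I'. reflexivity. Qed.

Lemma star_mul (x y : S) : (x*y)^* = y^* * x^*.
Proof.
  symmetry. apply (star_unique S).
  - pose proof (comm _ _ (idem_ss' y) (idem_ss x)) as C. mkpre C C'.
    pose proof (star_inv1 S x) as Ix. mkpre Ix Ix'.
    pose proof (star_inv1 S y) as Iy. mkpre Iy Iy'.
    lnorm. rewrite C'. rewrite Ix', Iy'. reflexivity.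
  - pose proof (comm _ _ (idem_ss x) (idem_ss' y)) as C. mkpre C C'.
    pose proof (star_inv2 S x) as Ix. mkpre Ix Ix'.
    pose proof (star_inv2 S y) as Iy. mkpre Iy Iy'.
    lnorm. rewrite C'. rewrite Ix', Iy'. reflexivity.
Qed.

Lemma conj (b f : S) : idem f -> b*f = b*f*b^* * b.
Proof.
  intro Hf. symmetry.
  pose proof (comm _ _ Hf (idem_ss b)) as C. mkpre C C'.
  pose proof (star_inv1 S b) as I. mkpre I I'.
  lnorm. rewrite C'. rewrite I'. reflexivity.
Qed.

Lemma nle_star_r (a b : S) : nle a b -> a^* = a^* * a * b^*.
Proof.
  unfold nle; intro H.
  assert (H1: a^* = (b * (a^* * a))^*) by (rewrite H; reflexivity).
  rewrite star_mul, (idem_star _ (idem_ss a)) in H1. exact H1.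
Qed.

Lemma le_lr (a b : S) : nle a b -> a = a * a^* * b.
Proof.
  intro H. pose proof (nle_star_r _ _ H) as H1. unfold nle in H.
  assert (H2: a * a^* = a * b^*).
  { rewrite H1 at 1. pose proof (star_inv1 S a) as I. mkpre I I'. lnorm. rewrite I'. reflexivity. }
  transitivity (b * (a^* * a)). { auto. }
  rewrite (conj _ _ (idem_ss a)). rewrite H. rewrite <- H2. reflexivity.
Qed.

Lemma nle_star (a b : S) : nle a b -> nle (a^*) (b^*).
Proof.
  intro H. pose proof (le_lr _ _ H) as H1. unfold nle.
  assert (H2: a^* = (a*a^* * b)^*) by (rewrite <- H1; reflexivity).
  rewrite !star_mul in H2. rewrite H2 at 3. reflexivity.
Qed.

Lemma nle_refl (a : S) : nle a a.
Proof. unfold nle. pose proof (star_inv1 S a) as I. rewrite (mulA S). exact I. Qed.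

Lemma nle_idem (e f : S) : idem e -> (nle e f <-> f * e = e).
Proof. intro He. unfold nle. rewrite (idem_star _ He). unfold idem in He. rewrite He. tauto. Qed.

Lemma idem_antisym (e f : S) : idem e -> idem f -> nle e f -> nle f e -> e = f.
Proof.
  intros He Hf H1 H2. apply nle_idem in H1; auto. apply nle_idem in H2; auto.
  rewrite <- H1. rewrite (comm _ _ Hf He). auto.
Qed.

Lemma nle_trans (a b c : S) : nle a b -> nle b c -> nle a c.
Proof.
  intros H1 H2.
  pose proof (le_lr _ _ H1) as L.
  assert (E1: a^* * a = a^* * b).
  { rewrite L at 2. pose proof (star_inv2 S a) as I. mkpre I I'. lnorm. rewrite I'. reflexivity. }
  assert (E2: b^* * b * (a^* * a) = a^* * a).
  { rewrite <- (comm _ _ (idem_ss a) (idem_ss b)). rewrite E1 at 1.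
    pose proof (star_inv1 S b) as I. mkpre I I'. lnorm. rewrite I'. rewrite <- !(mulA S (one S)). rewrite <- E1. reflexivity. }
  unfold nle in *. rewrite <- E2. rewrite (mulA S). rewrite H2. exact H1.
Qed.

Lemma nle_mul (a b c d : S) : nle a b -> nle c d -> nle (a*c) (b*d).
Proof.
  intros H1 H2. unfold nle in *.
  assert (K: d * (c^* * (a^* * a) * c) = a^* * a * c).
  { transitivity (d * (c^* * c * c^*) * (a^* * a) * c).
    { rewrite (star_inv2 S c). rewrite !(mulA S). reflexivity. }
    transitivity (c * c^* * (a^* * a) * c).
    { rewrite (mulA S d (c^* * c) (c^*)), H2. reflexivity. }
    rewrite (comm _ _ (idem_ss' c) (idem_ss a)).
    rewrite <- (mulA S), <- (mulA S (a^*)), <- (mulA S (a^*)), (star_inv1 S c). rewrite !(mulA S). reflexivity. }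
  rewrite star_mul.
  transitivity (b * (d * (c^* * (a^* * a) * c))).
  { rewrite !(mulA S). reflexivity. }
  rewrite K. rewrite !(mulA S). rewrite <- (mulA S b). rewrite H1. reflexivity.
Qed.


Lemma nle_one (e : S) : idem e -> nle e (one S).
Proof. intro He. apply nle_idem; auto. apply mul1s. Qed.

Lemma join_idem (C : list S) (j : S) : (forall c, In c C -> idem c) -> is_join C j -> idem j.
Proof.
  intros HC [_ Hl]. assert (H: nle j (one S)) by (apply Hl; intros; apply nle_one; auto).
  unfold nle in H. rewrite (mul1s S) in H. rewrite <- H. apply idem_ss.
Qed.

Lemma compat_idem (C : list S) : (forall c, In c C -> idem c) -> compat_set C.
Proof.
  intros HC a b Ha Hb. split; rewrite idem_star by auto; apply idem_mul; auto.
Qed.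

Lemma Jset_nle (s e : S) : Jset s e <-> idem e /\ nle e s.
Proof. split; intros [He H]; split; auto; apply nle_idem; auto. Qed.

Lemma Jset_star (s e : S) : Jset s e -> Jset (s^*) e.
Proof.
  intro H. apply Jset_nle in H. destruct H as [He H]. apply Jset_nle. split; auto.
  apply nle_star in H. rewrite idem_star in H; auto.
Qed.

Lemma Jset_right (s e : S) : Jset s e -> e * s = e.
Proof.
  intro H. apply Jset_star in H. destruct H as [He H].
  apply (f_equal (star S)) in H. rewrite star_mul, star_star, idem_star in H; auto.
Qed.

Lemma Jset_down (s x e : S) : Jset s x -> idem e -> nle e x -> Jset s e.
Proof.
  intros [Hx H] He Hl. apply nle_idem in Hl; auto. split; auto.
  rewrite <- Hl, (mulA S), H. reflexivity.
Qed.

Lemma meet_prod (e f : S) : idem e -> idem f -> is_meetE e f (e*f).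
Proof.
  intros He Hf. pose proof (idem_mul _ _ He Hf) as Hef. split; [auto|split;[|split]].
  - apply nle_idem; auto. rewrite (mulA S). unfold idem in He. rewrite He. reflexivity.
  - apply nle_idem; auto. rewrite (comm _ _ He Hf). rewrite (mulA S). unfold idem in Hf. rewrite Hf. reflexivity.
  - intros u Hu H1 H2. apply nle_idem in H1; auto. apply nle_idem in H2; auto.
    apply nle_idem; auto. rewrite <- (mulA S), H2, H1. reflexivity.
Qed.

Lemma meet_unique (e f m : S) : idem e -> idem f -> is_meetE e f m -> m = e*f.
Proof.
  intros He Hf H. pose proof (meet_prod _ _ He Hf) as H'.
  destruct H as [Hm [H1 [H2 H3]]]. destruct H' as [Hef [H1' [H2' H3']]].
  apply idem_antisym; auto.
Qed.

Lemma idem_zero : idem (zero S).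
Proof. apply mul0s. Qed.

Lemma J3a (s t e : S) : Jset (s*t) e -> nle e (s*s^*).
Proof.
  intros [He H]. apply nle_idem; auto. rewrite <- H.
  pose proof (star_inv1 S s) as I. mkpre I I'. lnorm. rewrite I'. reflexivity.
Qed.

Lemma J3b (s t e : S) : Jset (s*t) e -> nle e (t^* * t).
Proof.
  intro HJ. pose proof (Jset_right _ _ HJ) as R. destruct HJ as [He _].
  apply nle_idem; auto. rewrite (comm _ _ (idem_ss t) He). rewrite <- R at 1.
  mkpre R R'. pose proof (star_inv1 S t) as I. mkpre I I'. lnorm. rewrite I'. rewrite R'. reflexivity.
Qed.

Lemma J4 (s t r e1 e2 : S) : Jset (s^* * t) e1 -> Jset (t^* * r) e2 -> Jset (s^* * r) (e1*e2).
Proof.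
  intros H1 H2. apply Jset_nle in H1. apply Jset_nle in H2.
  destruct H1 as [He1 L1]. destruct H2 as [He2 L2].
  apply Jset_nle. split. apply idem_mul; auto.
  pose proof (nle_mul _ _ _ _ L1 L2) as L.
  assert (M: nle ((s^* * t) * (t^* * r)) (s^* * r)).
  { rewrite (mulA S (s^* * t)), <- (mulA S (s^*) t).
    apply nle_mul; [| apply nle_refl]. rewrite <- (muls1 S (s^*)) at 2.
    apply nle_mul. apply nle_refl. apply nle_one. apply idem_ss'. }
  eapply nle_trans; eauto.
Qed.

Section B.
Hypothesis Hb : boolean_inverse_monoid (S:=S).

Lemma cover_max (s : S) (C : list S) (j : S) : (forall c, In c C -> Jset s c) -> is_cover C (Jset s) ->
  is_join C j -> Jset s j /\ forall e, Jset s e -> nle e j.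
Proof.
  intros HC Hcov Hj.
  assert (HCi : forall c, In c C -> idem c) by (intros c Hc; apply HC; auto).
  pose proof (compat_idem _ HCi) as Hcp.
  pose proof (join_idem _ _ HCi Hj) as Hji.
  destruct Hb as [Hjn [Hd HE]].
  split.
  - destruct (Hd C j s Hcp Hj) as [H1 _].
    assert (Hm: map (fun a => s*a) C = C).
    { rewrite <- (map_id C) at 2. apply map_ext_in. intros a Ha. apply HC; auto. }
    rewrite Hm in H1. pose proof (join_idem _ _ HCi H1) as Hsj.
    split; auto. apply idem_antisym; auto.
    + apply (proj2 H1). apply (proj1 Hj).
    + apply (proj2 Hj). apply (proj1 H1).
  - intros e He. pose proof (proj1 He) as Hei.
    destruct HE as [[bot [top [Hbot [Htop [Hbd Hcomp]]]]] [_ [_ Hdis]]].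
    assert (Hb0: bot = zero S).
    { destruct (Hbd (zero S) idem_zero) as [H _]. unfold nle in H. rewrite (mul0s S) in H. auto. }
    destruct (Hcomp j Hji) as [c [Hc [Hmc Hjc]]].
    apply meet_unique in Hmc; auto. rewrite Hb0 in Hmc.
    assert (Hd0: e * c = zero S).
    { destruct (classic (e * c = zero S)) as [?|Hne]; auto.
      assert (HJ: Jset s (e*c)).
      { split. apply idem_mul; auto. rewrite (mulA S), (proj2 He). reflexivity. }
      destruct (Hcov _ HJ Hne) as [z [Hz Hzd]]. exfalso. apply Hzd.
      assert (Hzj: j * z = z).
      { apply nle_idem; auto. apply (proj1 Hj); auto. }
      rewrite (mulA S), (comm z e) by auto. rewrite <- (mulA S).
      rewrite <- Hzj, (comm j z) by auto. rewrite <- (mulA S z), <- Hmc.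
      rewrite (muls0 S), (muls0 S). reflexivity. }
    assert (Hm1: is_meetE e top e).
    { pose proof (meet_prod _ _ Hei Htop) as H.
      destruct (Hbd e Hei) as [_ Ht]. apply nle_idem in Ht; auto.
      rewrite (comm e top), Ht in H; auto. }
    assert (Hjn2: is_joinE (e*j) (e*c) (e*j)).
    { rewrite Hd0. pose proof (idem_mul _ _ Hei Hji) as Hej.
      split; auto. split. apply nle_refl. split.
      - apply nle_idem. apply idem_zero. apply muls0.
      - auto. }
    pose proof (Hdis e j c top e (e*j) (e*c) (e*j) Hei Hji Hc Hjc Hm1
      (meet_prod _ _ Hei Hji) (meet_prod _ _ Hei Hc) Hjn2) as Heq.
    apply nle_idem; auto. rewrite (comm j e) by auto. auto.
Qed.

Hypothesis Hh : condH (S:=S).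

Lemma exists_es (s : S) : {x | Jset s x /\ forall e, Jset s e -> nle e x}.
Proof.
  apply constructive_indefinite_description.
  destruct (Hh s) as [C [HC Hcov]].
  assert (HCi : forall c, In c C -> idem c) by (intros c Hc; apply HC; auto).
  destruct (proj1 Hb C (compat_idem _ HCi)) as [j Hj].
  exists j. eapply cover_max; eauto.
Qed.

End B.
End A.

Theorem mainTheorem5 (S : InvMonoid) :
  @boolean_inverse_monoid S -> @condH S ->
  exists es : S -> S,
    (* (1) *)
    (forall s : S, idem (es s) /\
       (forall C, finite_cover_J s C -> is_join C (es s)) /\
       (forall e : S, Jset s e <-> (idem e /\ nle e (es s)))) /\
    (* (2) *)
    (forall s : S, es (star S s) = es s) /\
    (* (3) *)
    (forall s t : S, nle (es (mul S s t)) (mul S s (star S s)) /\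
                     nle (es (mul S s t)) (mul S (star S t) t)) /\
    (* (4) *)
    (forall s t r : S,
       nle (mul S (es (mul S (star S s) t)) (es (mul S (star S t) r)))
           (es (mul S (star S s) r))).
Proof.
  intros Hb Hh.
  pose (es := fun s => proj1_sig (exists_es S Hb Hh s)).
  assert (P : forall s, Jset s (es s) /\ forall e, Jset s e -> nle e (es s)).
  { intro s. exact (proj2_sig (exists_es S Hb Hh s)). }
  exists es. split; [|split; [|split]].
  - intro s. destruct (P s) as [HJ Hmax]. split; [exact (proj1 HJ)|split].
    + intros C [HC Hcov].
      assert (HCi : forall c, In c C -> idem c) by (intros c Hc; apply HC; auto).
      destruct (proj1 Hb C (compat_idem S C HCi)) as [j Hj].
      destruct (cover_max S Hb s C j HC Hcov Hj) as [HJj Hmj].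
      assert (j = es s) as <-; auto.
      apply idem_antisym; auto. apply HJj. apply HJ.
    + intro e; split.
      * intro He; split; [apply He | apply Hmax; auto].
      * intros [He Hl]. apply (Jset_down S s (es s) e HJ He Hl).
  - intro s. destruct (P s) as [HJ Hmax]. destruct (P (star S s)) as [HJ' Hmax'].
    apply idem_antisym. apply HJ'. apply HJ.
    + apply Hmax. apply Jset_star in HJ'. rewrite star_star in HJ'. auto.
    + apply Hmax'. apply Jset_star. auto.
  - intros s t. destruct (P (mul S s t)) as [HJ _]. split.
    + eapply J3a; eauto.
    + eapply J3b; eauto.
  - intros s t r. destruct (P (mul S (star S s) r)) as [_ Hmax]. apply Hmax.
    apply J4 with t. apply P. apply P.
Qed.
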